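(* Let $\mathbf g:\mathbb{R}^{d_{\mathrm{input}}}\to\mathbb{R}^{M}$ be any $\ell_\infty$-dist net (as defined in the context). Then $\mathbf g$ is 1-Lipschitz with respect to the $\ell_\infty$-norm: for all $\mathbf x_1,\mathbf x_2\in\mathbb{R}^{d_{\mathrm{input}}}$, $$\|\mathbf g(\mathbf x_1)-\mathbf g(\mathbf x_2)\|_\infty\le\|\mathbf x_1-\mathbf x_2\|_\infty .$$
   Context: An $\ell_\infty$-dist neuron with parameters $\theta=\{\mathbf w,b\}$ ($\mathbf w$ a vector, $b\in\mathbb{R}$) computes $u(\mathbf x,\theta)=\|\mathbf x-\mathbf w\|_\infty+b$. An $L$-layer $\ell_\infty$-dist net with hidden widths $d_1,\dots,d_L$ takes $\mathbf x^{(0)}=\mathbf x\in\mathbb{R}^{d_{\mathrm{input}}}$ and computes, for $1\le l\le L$ and $1\le k\le d_l$, $x^{(l)}_k=\|\mathbf x^{(l-1)}-\mathbf w^{(l,k)}\|_\infty+b^{(l,k)}$ with arbitrary real parameters $\mathbf w^{(l,k)}\in\mathbb{R}^{d_{l-1}}$ (where $d_0=d_{\mathrm{input}}$), $b^{(l,k)}\in\mathbb{R}$. With $d_L=M$, the output of the net is $\mathbf g(\mathbf x)=(-x^{(L)}_1,\dots,-x^{(L)}_M)$. *)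

(* Defs.v *)
From mathcomp Require Import all_boot all_order all_algebra.
Set Implicit Arguments. Unset Strict Implicit. Unset Printing Implicit Defensive.
Import Order.TTheory GRing.Theory Num.Theory.
Local Open Scope ring_scope.

Definition linf_norm (R : realDomainType) (n : nat) (x : 'I_n -> R) : R :=
  \big[Num.max/0]_(i < n) `|x i|.

Definition dist_neuron (R : realDomainType) (n : nat)
  (w : 'I_n -> R) (b : R) (x : 'I_n -> R) : R :=
  linf_norm (fun i => x i - w i) + b.

(* An l_inf-dist net with widths d 0 = d_input, d 1, ..., d L.
   W l k and B l k are the parameters w^{(l+1,k)}, b^{(l+1,k)} of neuron k
   of layer l+1 (layers are 0-indexed here).  Only l < L is used.
   dist_layers d W B l x = x^{(l)}. *)
Fixpoint dist_layers (R : realDomainType) (d : nat -> nat)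
  (W : forall l : nat, 'I_(d l.+1) -> 'I_(d l) -> R)
  (B : forall l : nat, 'I_(d l.+1) -> R) (l : nat) : ('I_(d 0) -> R) -> ('I_(d l) -> R) :=
  match l with
  | 0 => fun x => x
  | l'.+1 => fun x => fun k => dist_neuron (W l' k) (B l' k) (@dist_layers R d W B l' x)
  end.

Definition dist_net (R : realDomainType) (d : nat -> nat)
  (W : forall l : nat, 'I_(d l.+1) -> 'I_(d l) -> R)
  (B : forall l : nat, 'I_(d l.+1) -> R) (L : nat) (x : 'I_(d 0) -> R) : 'I_(d L) -> R :=
  fun k => - @dist_layers R d W B L x k.

Arguments dist_layers {R d} W B l x _.
Arguments dist_net {R d} W B L x _.

(* Main.v *)
Require Import Defs.
From mathcomp Require Import all_boot all_order all_algebra.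
From mathcomp Require Import lra.
Import Order.TTheory GRing.Theory Num.Theory.
Local Open Scope ring_scope.

Lemma le_linf (R : realFieldType) n (x : 'I_n -> R) i : `|x i| <= linf_norm x.
Proof.
rewrite /linf_norm; have : i \in index_enum 'I_n by rewrite mem_index_enum.
elim: (index_enum _) => [|j s IH] //=; rewrite big_cons in_cons => /orP [/eqP <-|/IH h].
  by rewrite le_max lexx.
by rewrite le_max h orbT.
Qed.

Arguments le_linf {R n} x i.

Lemma linf_le (R : realFieldType) n (x : 'I_n -> R) c :
  0 <= c -> (forall i, `|x i| <= c) -> linf_norm x <= c.
Proof.
move=> c0 H; rewrite /linf_norm; elim: (index_enum _) => [|j s IH].
  by rewrite big_nil.
by rewrite big_cons ge_max H IH.
Qed.

Arguments linf_le {R n} x c.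

Lemma linf_ge0 (R : realFieldType) n (x : 'I_n -> R) : 0 <= linf_norm x.
Proof.
rewrite /linf_norm; elim: (index_enum _) => [|j s IH].
  by rewrite big_nil.
by rewrite big_cons le_max IH orbT.
Qed.

Arguments linf_ge0 {R n} x.

Lemma neuron_lip (R : realFieldType) n (w : 'I_n -> R) b x y :
  `|dist_neuron w b x - dist_neuron w b y| <= linf_norm (fun i => x i - y i).
Proof.
rewrite /dist_neuron.
have key : forall x y : 'I_n -> R,
  linf_norm (fun i => x i - w i) <= linf_norm (fun i => x i - y i) + linf_norm (fun i => y i - w i).
  move=> u v; apply: linf_le; first by rewrite addr_ge0 ?linf_ge0.
  move=> i; have -> : u i - w i = (u i - v i) + (v i - w i) by rewrite addrA subrK.
  apply: le_trans (ler_normD _ _) _.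
  apply: lerD.
    exact: (le_linf (fun i => u i - v i)).
  exact: (le_linf (fun i => v i - w i)).
have sym : linf_norm (fun i => y i - x i) = linf_norm (fun i => x i - y i).
  by rewrite /linf_norm; apply: eq_bigr => i _; rewrite distrC.
have h1 := key x y; have h2 := key y x; rewrite sym in h2.
rewrite ler_norml; apply/andP; split; lra.
Qed.

Arguments neuron_lip {R n} w b x y.

Theorem fact1 (R : realFieldType) (d : nat -> nat)
  (W : forall l : nat, 'I_(d l.+1) -> 'I_(d l) -> R)
  (B : forall l : nat, 'I_(d l.+1) -> R) (L : nat)
  (x1 x2 : 'I_(d 0%N) -> R) :
  linf_norm (fun k => dist_net W B L x1 k - dist_net W B L x2 k)
  <= linf_norm (fun i => x1 i - x2 i).
Proof.
have H : forall l, linf_norm (fun k => dist_layers W B l x1 k - dist_layers W B l x2 k)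
  <= linf_norm (fun i => x1 i - x2 i).
  elim=> [|l IH] //=; apply: linf_le; first exact: linf_ge0.
  by move=> k; apply: le_trans (neuron_lip _ _ _ _) IH.
apply: le_trans (H L); apply: linf_le; first exact: linf_ge0.
move=> k; rewrite /dist_net -opprD normrN.
exact: (le_linf (fun k => dist_layers W B L x1 k - dist_layers W B L x2 k)).
Qed.
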